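(* A quantum graph $\mathcal{S} \subseteq M_n$ is connected if and only if $\sum_{i\neq j} \dim\big[P_j \mathcal{S} P_i\big] \ge 2(m-1)$ whenever $m\in\mathbb{N}$ and $P_1,\dots,P_m\in M_n$ are nontrivial, mutually disjoint projections with $P_1+\dots+P_m=I_n$.
   Context: $M_n$ denotes the $n\times n$ complex matrices, $I_n$ the identity. A projection is $P$ with $P=P^2=P^\dagger$; it is nontrivial if $P\neq 0$ and $P\neq I_n$; projections $P,Q$ are disjoint if $PQ=0$. A quantum graph on $M_n$ is a linear subspace $\mathcal{S}\subseteq M_n$ closed under adjoints and containing $I_n$. $P\mathcal{S}Q=\{PAQ: A\in\mathcal{S}\}$, a linear subspace. For subspaces, $\mathcal{U}\mathcal{V}=\operatorname{span}\{UV: U\in\mathcal{U},V\in\mathcal{V}\}$, $\mathcal{U}^0=\mathbb{C}I_n$, $\mathcal{U}^{k+1}=\mathcal{U}^k\mathcal{U}$. $\mathcal{S}$ is connected if $\mathcal{S}^m=M_n$ for some $m\in\mathbb{N}$. *)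

(* Defs.v *)
From HB Require Import structures.
From mathcomp Require Import all_boot all_order all_algebra all_field.
From mathcomp Require Import reals complex.
Set Implicit Arguments. Unset Strict Implicit. Unset Printing Implicit Defensive.
Import Order.TTheory GRing.Theory Num.Theory.
Local Open Scope ring_scope.

Definition mxadj {C : numClosedFieldType} {m n : nat} (A : 'M[C]_(m, n)) : 'M[C]_(n, m) :=
  (map_mx Num.conj A)^T.

Definition is_projection {C : numClosedFieldType} {n : nat} (P : 'M[C]_n) : Prop :=
  P *m P = P /\ mxadj P = P.

Definition nontrivial_projection {C : numClosedFieldType} {n : nat} (P : 'M[C]_n) : Prop :=
  is_projection P /\ P <> 0 /\ P <> 1%:M.

Definition quantum_graph {C : numClosedFieldType} {n : nat} (S : {vspace 'M[C]_n.+1}) : Prop :=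
  (1%:M \in S) /\ (forall A, A \in S -> mxadj A \in S).

Definition compress {C : numClosedFieldType} {n : nat} (P : 'M[C]_n.+1)
  (S : {vspace 'M[C]_n.+1}) (Q : 'M[C]_n.+1) : {vspace 'M[C]_n.+1} :=
  (linfun (fun A : 'M[C]_n.+1 => P *m A *m Q) @: S)%VS.

(* Connected: S^m = M_n for some m, with S^0 = C I and S^(k+1) = S^k S
   (falgebra's (U ^+ k)%VS, with U ^+ 0 = 1%VS = span of the identity). *)
Definition qconnected {C : numClosedFieldType} {n : nat} (S : {vspace 'M[C]_n.+1}) : Prop :=
  exists m : nat, (S ^+ m)%VS = fullv.

(* Main.v *)
Require Import Defs.
From HB Require Import structures.
From mathcomp Require Import all_boot all_order all_algebra all_field.
From mathcomp Require Import reals complex zify.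
From mathcomp Require Import sesquilinear spectral.
From Stdlib Require Import Classical_Prop.
Set Implicit Arguments. Unset Strict Implicit. Unset Printing Implicit Defensive.
Import Order.TTheory GRing.Theory Num.Theory.
Local Open Scope ring_scope.

Section Adj.
Variable C : numClosedFieldType.

Lemma mxadjM m n p (A : 'M[C]_(m, n)) (B : 'M[C]_(n, p)) :
  mxadj (A *m B) = mxadj B *m mxadj A.
Proof. by rewrite /mxadj map_mxM trmx_mul. Qed.

Lemma mxadjK m n (A : 'M[C]_(m, n)) : mxadj (mxadj A) = A.
Proof. by apply/matrixP => i j; rewrite !mxE conjCK. Qed.

Lemma mxadjD m n (A B : 'M[C]_(m, n)) : mxadj (A + B) = mxadj A + mxadj B.
Proof. by apply/matrixP => i j; rewrite !mxE rmorphD. Qed.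

Lemma mxadjN m n (A : 'M[C]_(m, n)) : mxadj (- A) = - mxadj A.
Proof. by apply/matrixP => i j; rewrite !mxE rmorphN. Qed.

Lemma mxadjZ m n a (A : 'M[C]_(m, n)) : mxadj (a *: A) = (Num.conj a) *: mxadj A.
Proof. by apply/matrixP => i j; rewrite !mxE rmorphM. Qed.

Lemma mxadj1 n : mxadj (1%:M : 'M[C]_n) = 1%:M.
Proof. by apply/matrixP => i j; rewrite !mxE rmorph_nat eq_sym. Qed.

Lemma mxadj0 m n : mxadj (0 : 'M[C]_(m, n)) = 0.
Proof. by apply/matrixP => i j; rewrite !mxE rmorph0. Qed.

Lemma mxadj_eq0 m n (A : 'M[C]_(m, n)) : (mxadj A == 0) = (A == 0).
Proof.
apply/eqP/eqP => [h|->]; last exact: mxadj0.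
by rewrite -[A]mxadjK h mxadj0.
Qed.

Lemma mxadj_sum m n (I : finType) (P : pred I) (F : I -> 'M[C]_(m, n)) :
  mxadj (\sum_(i | P i) F i) = \sum_(i | P i) mxadj (F i).
Proof. by apply: (big_morph _ (@mxadjD m n) (mxadj0 m n)). Qed.

Lemma mxadjE m n (A : 'M[C]_(m, n)) : mxadj A = map_mx Num.conj (A ^T).
Proof. by rewrite /mxadj map_trmx. Qed.

Lemma delta_witness m (X Y : 'M[C]_m) : X != 0 -> Y != 0 ->
  exists B, X *m B *m Y != 0.
Proof.
move=> /eqP X0 /eqP Y0.
have /existsP[a /existsP[b Xab]] : [exists a, exists b, X a b != 0].
  rewrite -[[exists _, _]]negbK; apply/negP => /existsPn h; apply: X0; apply/matrixP => a b.
  by move/(_ a)/existsPn/(_ b)/negPn/eqP: h; rewrite mxE.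
have /existsP[c /existsP[d Ycd]] : [exists a, exists b, Y a b != 0].
  rewrite -[[exists _, _]]negbK; apply/negP => /existsPn h; apply: Y0; apply/matrixP => a' b'.
  by move/(_ a')/existsPn/(_ b')/negPn/eqP: h; rewrite mxE.
exists (delta_mx b c); apply/eqP => /matrixP/(_ a d).
rewrite -(mul_delta_mx (0 : 'I_1)) mulmxA -colE -mulmxA -rowE !mxE big_ord1 !mxE.
by move/eqP; rewrite mulf_eq0 (negbTE Xab) (negbTE Ycd).
Qed.

End Adj.
Section Comb.
Local Open Scope nat_scope.
Lemma sum_in_le (I : finType) (K : {set I}) (g : I -> nat) :
  \sum_(a in K) g a <= \sum_a g a.
Proof. by rewrite [X in _ <= X](bigID (mem K)) /= leq_addr. Qed.

Lemma comb m (e : 'I_m -> 'I_m -> nat) :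
  (forall i j, 0 < e i j -> 0 < e j i) ->
  (forall K : {set 'I_m}, K != set0 -> K != setT ->
     exists i j, [/\ i \in K, j \notin K & 0 < e i j]) ->
  2 * (m - 1) <= \sum_(i < m) \sum_(j < m | i != j) e i j.
Proof.
move=> esym hK.
case: m e esym hK => [|m'] e esym hK; first by rewrite muln0.
pose f (a b : 'I_m'.+1) : nat := if a == b then 0 else (0 < e a b).
pose F (K : {set 'I_m'.+1}) := \sum_(a in K) \sum_(b in K) f a b.
have claim : forall t, t < m'.+1 -> exists K : {set 'I_m'.+1}, #|K| = t.+1 /\ 2 * t <= F K.
  elim=> [|t IH] ht.
    by exists [set ord0]; rewrite cards1.
  have [K [cK FK]] := IH (ltnW ht).
  have K0 : K != set0 by rewrite -card_gt0 cK.
  have KT : K != setT.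
    by apply/eqP => KT; move: ht; rewrite -cK KT cardsT card_ord ltnn.
  have [i [j [iK jK eij]]] := hK K K0 KT.
  have ij : i != j by apply: contraNneq jK => <-.
  exists (j |: K); split; first by rewrite cardsU1 jK cK.
  rewrite /F big_setU1 //= big_setU1 //=.
  rewrite [X in _ <= _ + X](eq_bigr (fun a => f a j + \sum_(b in K) f a b)); last by move=> a _; rewrite big_setU1.
  rewrite big_split /= mulnS.
  have fji : f j i = 1 by rewrite /f eq_sym (negbTE ij) esym.
  have fij : f i j = 1 by rewrite /f (negbTE ij) eij.
  have h1 : f j i <= \sum_(b in K) f j b by rewrite (bigD1 i) //= leq_addr.
  have h2 : f i j <= \sum_(a in K) f a j by rewrite (bigD1 i) //= leq_addr.
  rewrite fji in h1; rewrite fij in h2.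
  rewrite -/(F K); move: h1 h2 FK; move: (F K) (\sum_(i0 in K) f j i0) (\sum_(i0 in K) f i0 j) (f j j) => x y z w; lia.
have [K [cK FK]] := claim m' (ltnSn _).
rewrite subn1 /=; apply: (leq_trans FK); rewrite /F; apply: leq_trans; first exact: sum_in_le.
apply: leq_sum => a _; apply: leq_trans; first exact: sum_in_le.
rewrite [X in X <= _](bigD1 a) //= /f eqxx add0n.
under eq_bigl => b do rewrite eq_sym.
apply: leq_sum => b ab; rewrite (negbTE ab); by case: (e a b).
Qed.
End Comb.

Section Fwd.
Variable C : numClosedFieldType.
Variable n : nat.
Implicit Types (S : {vspace 'M[C]_n.+1}) (P Q A : 'M[C]_n.+1).

Lemma compress_fun P Q A : linfun (fun A : 'M[C]_n.+1 => P *m A *m Q) A = P *m A *m Q.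
Proof. exact: (lfunE (mulmxr Q \o mulmx P) A). Qed.

Lemma compress_mem P S Q A : A \in S -> P *m A *m Q \in compress P S Q.
Proof. move=> AS; rewrite /compress; have := memv_img (linfun (fun A : 'M[C]_n.+1 => P *m A *m Q)) AS; by rewrite compress_fun. Qed.


Lemma compress0P P S Q : \dim (compress P S Q) = 0%N <-> (forall A, A \in S -> P *m A *m Q = 0).
Proof.
split=> [/eqP d0 A AS|h].
  by move: (compress_mem P Q AS); rewrite dimv_eq0 in d0; rewrite (eqP d0) memv0 => /eqP.
apply/eqP; rewrite dimv_eq0 -subv0; apply/subvP => x /memv_imgP [A AS ->].
by rewrite compress_fun h // memv0.
Qed.


Lemma adj_zero S P Q : quantum_graph S -> mxadj P = P -> mxadj Q = Q ->
  (forall A, A \in S -> P *m A *m Q = 0) -> (forall A, A \in S -> Q *m A *m P = 0).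
Proof.
move=> [_ qS] hP hQ h A AS.
by rewrite -[A]mxadjK -hP -hQ -!mxadjM mulmxA h ?mxadj0 // qS.
Qed.

Lemma comm_expv S Q : (forall A, A \in S -> Q *m A = A *m Q) ->
  forall k A, A \in (S ^+ k)%VS -> Q *m A = A *m Q.
Proof.
move=> h k; suff: (S ^+ k <= 'C[Q])%VS.
  by move=> /subvP sub A /sub /cent1vP; rewrite -!mulmxE => ->.
elim: k => [|k IH]; first by rewrite expv0 -memvE cent1v1.
rewrite expvSr; apply/prodvP => u v uS vS; apply/cent1vP.
move/subvP: IH => /(_ u uS) /cent1vP; rewrite -!mulmxE => hu.
by rewrite -mulmxA -h // [LHS]mulmxA hu mulmxA.
Qed.

Lemma fwd S : quantum_graph S -> qconnected S ->
   forall (m : nat) (P : 'I_m -> 'M[C]_n.+1),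
     (forall i, nontrivial_projection (P i)) ->
     (forall i j, i != j -> P i *m P j = 0) ->
     \sum_(i < m) P i = 1%:M ->
     (2 * (m - 1) <= \sum_(i < m) \sum_(j < m | i != j) \dim (compress (P j) S (P i)))%N.
Proof.
move=> qS [k hk] m P hP hd hs.
have herm i : mxadj (P i) = P i by case: (hP i) => [[]].
apply: comb.
  move=> i j; rewrite !lt0n; apply: contraNN => /eqP/compress0P h.
  by apply/eqP/compress0P; apply: adj_zero.
move=> K K0 KT.
case: (boolP [exists i in K, exists j in ~: K, (0 < \dim (compress (P j) S (P i)))%N]).
  move=> /existsP[i /andP[iK /existsP[j /andP[jK pos]]]].
  by exists i, j; rewrite in_setC in jK.
move=> /existsPn hno; exfalso.
have h1 i j A : i \in K -> j \notin K -> A \in S -> P j *m A *m P i = 0.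
  move=> iK jK; move: A; apply/compress0P/eqP; rewrite -leqn0 leqNgt.
  move: (hno i); rewrite iK /= => /existsPn /(_ j); by rewrite in_setC jK.
have h2 i j A : i \in K -> j \notin K -> A \in S -> P i *m A *m P j = 0.
  move=> iK jK; apply: (adj_zero qS (herm j) (herm i)) => B BS; exact: h1.
pose Q := \sum_(i in K) P i.
have split1 A : A = \sum_j A *m P j by rewrite -mulmx_sumr hs mulmx1.
have split2 A : A = \sum_j P j *m A by rewrite -mulmx_suml hs mul1mx.
have cQ : forall A, A \in S -> Q *m A = A *m Q.
  move=> A AS.
  have e1 : Q *m A = \sum_(i in K) \sum_(j in K) P i *m A *m P j.
    rewrite /Q mulmx_suml; apply: eq_bigr => i iK.
    rewrite {1}(split1 (P i *m A)) (bigID (mem K)) /= [X in _ + X]big1 ?addr0 //.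
    by move=> j jK; rewrite h2.
  have e2 : A *m Q = \sum_(j in K) \sum_(i in K) P i *m A *m P j.
    rewrite /Q mulmx_sumr; apply: eq_bigr => j jK.
    rewrite {1}(split2 (A *m P j)) (bigID (mem K)) /= [X in _ + X]big1 ?addr0.
      by apply: eq_bigr => i _; rewrite mulmxA.
    by move=> i iK; rewrite mulmxA h1.
  by rewrite e1 e2 exchange_big.
have cAll X : Q *m X = X *m Q by apply: (@comm_expv S Q cQ k X); rewrite hk memvf.
have [i0 i0K] := set0Pn _ K0.
have [j0 j0K] : exists j0, j0 \in ~: K.
  apply/set0Pn; apply: contra KT => /eqP h; by rewrite -[K]setCK h setC0.
rewrite in_setC in j0K.
have e3 : P i0 *m Q = P i0.
  rewrite /Q mulmx_sumr (bigD1 i0) //= big1 ?addr0; first by case: (hP i0) => [[]].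
  by move=> i /andP[_ ne]; rewrite hd // eq_sym.
have e4 : Q *m P j0 = 0.
  rewrite /Q mulmx_suml big1 // => i iK; apply: hd; apply: contraNneq j0K => <-.
  exact: iK.
have [nz0 _] : P i0 != 0 /\ True by case: (hP i0) => [_ [/eqP ? _]].
have [nz1 _] : P j0 != 0 /\ True by case: (hP j0) => [_ [/eqP ? _]].
have [Y] := delta_witness nz0 nz1.
by rewrite -{1}e3 -(mulmxA (P i0)) cAll -!mulmxA e4 !mulmx0 eqxx.
Qed.

End Fwd.

Section Bk.
Variable C : numClosedFieldType.

Lemma mxadjE' m n (A : 'M[C]_(m, n)) : mxadj A = (A ^t* )%sesqui.
Proof. by rewrite /mxadj map_trmx. Qed.

Lemma orth_proj p n (V : 'M[C]_(p, n)) : exists Q : 'M[C]_n,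
  [/\ Q *m Q = Q, mxadj Q = Q, (Q <= V)%MS &
     forall q (X : 'M[C]_(q, n)), (X <= V)%MS -> X *m Q = X].
Proof.
pose Sb := schmidt (row_base V).
have uS : Sb *m mxadj Sb = 1%:M.
  rewrite mxadjE'; apply/unitarymxP; apply: schmidt_unitarymx; exact: rank_leq_col.
have eS : (Sb :=: V)%MS.
  exact: eqmx_trans (eqmx_schmidt_free (row_base_free V)) (eq_row_base V).
exists (mxadj Sb *m Sb); split.
- by rewrite mulmxA -(mulmxA (mxadj Sb)) uS mulmx1.
- by rewrite mxadjM mxadjK.
- by rewrite -eS submxMl.
- move=> q X XV; rewrite -eS in XV.
  by rewrite -(mulmxKpV XV) -!mulmxA (mulmxA Sb) uS mul1mx.
Qed.

Lemma eig_in p n (V : 'M[C]_(p, n)) (M : 'M[C]_n) : (V *m M <= V)%MS -> V != 0 ->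
  exists u : 'rV[C]_n, exists a, [/\ u != 0, (u <= V)%MS & u *m M = a *: u].
Proof.
move=> sVM V0.
pose Vb := row_base V.
have eV : (Vb :=: V)%MS by exact: eq_row_base.
have sVbM : (Vb *m M <= Vb)%MS by rewrite eV (submx_trans _ sVM) // submxMr // eV.
have r0 : (0 < \rank V)%N by rewrite lt0n mxrank_eq0.
have [a /eigenvalueP [v vM v0]] := eigenvalue_closed (Vb *m M *m pinvmx Vb) r0.
exists (v *m Vb), a; split.
- by rewrite mulmx_free_eq0 ?row_base_free.
- by rewrite -eV submxMl.
- by rewrite -mulmxA -(mulmxKpV sVbM) mulmxA vM scalemxAl.
Qed.


Variable n : nat.
Implicit Types (A : {vspace 'M[C]_n.+1}).

Definition star_alg A := [/\ 1%:M \in A,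
  (forall x y, x \in A -> y \in A -> x *m y \in A) &
  (forall x, x \in A -> mxadj x \in A)].

Definition orbmx A (v : 'rV[C]_n.+1) : 'M[C]_(\dim A, n.+1) :=
  \matrix_(k < \dim A) (v *m (vbasis A)`_k).

Lemma vbasis_in A (k : 'I_(\dim A)) : (vbasis A)`_k \in A.
Proof. by apply: vbasis_mem; apply: mem_nth; rewrite size_tuple. Qed.

Lemma orbmx_mem A v B : B \in A -> (v *m B <= orbmx A v)%MS.
Proof.
move=> BA; rewrite (coord_vbasis BA) mulmx_sumr; apply: summx_sub => k _.
by rewrite -scalemxAr scalemx_sub // -[X in (X <= _)%MS](rowK (fun k => v *m (vbasis A)`_k)) row_sub.
Qed.

Lemma orbmx_stable A v B : star_alg A -> B \in A -> (orbmx A v *m B <= orbmx A v)%MS.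
Proof.
move=> [_ hM _] BA; apply/row_subP => k.
by rewrite row_mul rowK -mulmxA orbmx_mem // hM // vbasis_in.
Qed.

Lemma orbmx_self A v : star_alg A -> (v <= orbmx A v)%MS.
Proof. by move=> [h1 _ _]; rewrite -[v in (v <= _)%MS]mulmx1 orbmx_mem. Qed.

Lemma orbmx_full A v w : (1%:M <= orbmx A v)%MS -> exists2 B, B \in A & v *m B = w.
Proof.
move=> full; have wV : (w <= orbmx A v)%MS by exact: submx_trans (submx1 _) full.
exists (\sum_(k < \dim A) (w *m pinvmx (orbmx A v)) 0 k *: (vbasis A)`_k).
  by apply: memv_suml => k _; apply: memvZ; apply: vbasis_in.
rewrite mulmx_sumr -[RHS](mulmxKpV wV) (mulmx_sum_row (w *m pinvmx _)); apply: eq_bigr => k _.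
by rewrite rowK scalemxAr.
Qed.

Lemma proj_from_orb A v : star_alg A -> v != 0 -> ~~ (1%:M <= orbmx A v)%MS ->
  exists Q : 'M[C]_n.+1, [/\ is_projection Q, Q != 0, Q != 1%:M &
     forall B, B \in A -> Q *m B = B *m Q].
Proof.
move=> sA v0 nfull; have [h1 hM hadj] := sA.
have [Q [QQ aQ QV QX]] := orth_proj (orbmx A v).
have key B : B \in A -> Q *m B *m Q = Q *m B.
  move=> BA; apply: QX; apply: submx_trans (orbmx_stable v sA BA).
  exact: submxMr.
exists Q; split.
- by split.
- apply: contraNneq v0 => Q0.
  by rewrite -(QX _ _ (orbmx_self v sA)) Q0 mulmx0.
- by apply: contra nfull => /eqP Q1; rewrite -Q1.
- move=> B BA; have e1 := key B BA; have e2 := key _ (hadj _ BA).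
  have : mxadj (Q *m mxadj B *m Q) = mxadj (Q *m mxadj B) by rewrite e2.
  by rewrite !mxadjM mxadjK aQ mulmxA e1 => ->.
Qed.


Lemma nzrow p (T : 'M[C]_(p, n.+1)) : T != 0 -> exists i, row i T != 0.
Proof.
move=> T0; have : ~~ (T <= (0 : 'M_n.+1))%MS by rewrite submx0.
by case/row_subPn => i; rewrite submx0 => ?; exists i.
Qed.

Lemma one_neq0 : (1%:M : 'M[C]_n.+1) != 0.
Proof. by apply/eqP => /matrixP/(_ 0 0); rewrite !mxE eqxx => /eqP; rewrite oner_eq0. Qed.

Lemma burnside A : star_alg A ->
  (forall v : 'rV[C]_n.+1, v != 0 -> forall w, exists2 B, B \in A & v *m B = w) ->
  A = fullv.
Proof.
move=> sA htr; have [h1 hM hadj] := sA.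
suff allin : forall X, X \in A.
  by apply/eqP; rewrite eqEsubv subvf; apply/subvP => X _; exact: allin.
have r1 T : T \in A -> T != 0 -> \rank T = 1%N -> forall X, X \in A.
  move=> TA T0 rT1.
  have [i Ti] := nzrow T0; set w := row i T.
  have Tw : (T <= w)%MS.
    have := (mxrank_leqif_eq (row_sub i T)).2; rewrite rank_rV Ti rT1 eqxx.
    by move/esym/andP => [].
  set c := T *m pinvmx w.
  have Tc : T = c *m w by rewrite /c mulmxKpV.
  have cq q : c *m q \in A.
    have [D DA wD] := htr w Ti q.
    by rewrite -wD mulmxA -Tc hM.
  have c0 : mxadj c != 0.
    by rewrite mxadj_eq0; apply: contraNneq T0 => c0; rewrite Tc c0 mul0mx.
  have pq (q : 'cV[C]_n.+1) (p : 'rV[C]_n.+1) : q *m p \in A.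
    have := hadj _ (cq (mxadj q)); rewrite mxadjM mxadjK => h.
    have [D DA cD] := htr _ c0 p.
    by rewrite -cD mulmxA hM.
  move=> X; rewrite (matrix_sum_delta X); apply: memv_suml => a _.
  apply: memv_suml => b _; apply: memvZ.
  by rewrite -(mul_delta_mx (0 : 'I_1)) pq.
have main r T : T \in A -> T != 0 -> (\rank T <= r)%N -> forall X, X \in A.
  elim: r T => [|r IH] T TA T0 rT.
    by move: rT; rewrite leqn0 mxrank_eq0 (negbTE T0).
  case: (eqVneq (\rank T) 1%N) => [/(r1 T TA T0)//|r1ne].
  have [i Ti] := nzrow T0; set y1 := row i T.
  have [j Tj] : exists j, ~~ (row j T <= y1)%MS.
    apply/row_subPn; apply: contra r1ne => sub.
    have := mxrankS sub; rewrite rank_rV Ti => le1.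
    by rewrite eqn_leq le1 lt0n mxrank_eq0.
  have [B BA yB] := htr y1 Ti (delta_mx 0 j).
  have sTM : (T *m (B *m T) <= T)%MS by rewrite mulmxA submxMl.
  have [u [a [u0 uT uM]]] := eig_in sTM T0.
  pose T' := T *m (B *m T - a%:M).
  have T'A : T' \in A.
    rewrite /T' mulmxBr mul_mx_scalar; apply: memvB; last exact: memvZ.
    by rewrite mulmxA hM // hM.
  have rT' : (\rank T' < \rank T)%N.
    rewrite -(mxrank_mul_ker T (B *m T - a%:M)) -/T'.
    rewrite -[X in (X < _)%N]addn0 ltn_add2l lt0n mxrank_eq0.
    apply: contraNneq u0 => cap0.
    have : (u <= T :&: kermx (B *m T - a%:M))%MS.
      rewrite sub_capmx uT; apply/sub_kermxP.
      by rewrite mulmxBr mul_mx_scalar uM subrr.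
    by rewrite cap0 submx0.
  case: (eqVneq T' 0) => [T'0|T'0]; last first.
    by apply: (IH T') => //; rewrite -ltnS; exact: leq_trans rT' rT.
  have : row i T' = 0 by rewrite T'0 row0.
  rewrite /T' row_mul mulmxBr mulmxA -/y1 yB -rowE mul_mx_scalar => /eqP.
  rewrite subr_eq0 => /eqP e.
  by move: Tj; rewrite e scalemx_sub.
exact: (main n.+1 1%:M h1 one_neq0 (rank_leq_row _)).
Qed.


Lemma commutant_proj A : star_alg A -> A != fullv ->
  exists Q : 'M[C]_n.+1, [/\ is_projection Q, Q != 0, Q != 1%:M &
     forall B, B \in A -> Q *m B = B *m Q].
Proof.
move=> sA An.
case: (classic (exists v : 'rV[C]_n.+1, v != 0 /\ ~~ (1%:M <= orbmx A v)%MS)).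
  by move=> [v [v0 nf]]; exact: (proj_from_orb sA v0 nf).
move=> hno; apply: False_ind; apply: (negP An); apply/eqP; apply: burnside => // v v0 w.
apply: orbmx_full; apply/negPn/negP => nf; apply: hno; exists v; split.
- exact: v0.
- exact: nf.
Qed.

Lemma span_adj (X : seq 'M[C]_n.+1) (W : {vspace 'M[C]_n.+1}) : (forall x, x \in X -> mxadj x \in W) ->
  forall v, v \in <<X>>%VS -> mxadj v \in W.
Proof.
move=> h v vX; have := @coord_span _ _ _ (in_tuple X) v vX.
move=> ->; rewrite mxadj_sum; apply: memv_suml => i _; rewrite mxadjZ; apply: memvZ.
by apply: h; apply: mem_nth.
Qed.

Lemma prodv_adj (U V U2 V2 : {vspace 'M[C]_n.+1}) :
  (forall u, u \in U -> mxadj u \in U2) -> (forall v, v \in V -> mxadj v \in V2) ->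
  forall x, x \in (U * V)%VS -> mxadj x \in (V2 * U2)%VS.
Proof.
move=> hU hV x; rewrite {1}unlock; apply: span_adj => _ /allpairsP [[u v] /= [uU vV ->]].
by rewrite -mulmxE mxadjM mulmxE; apply: memv_mul; [apply: hV | apply: hU]; apply: vbasis_mem.
Qed.

Lemma expv_adj (S : {vspace 'M[C]_n.+1}) : (forall x, x \in S -> mxadj x \in S) ->
  forall k x, x \in (S ^+ k)%VS -> mxadj x \in (S ^+ k)%VS.
Proof.
move=> hS; elim=> [|k IH] x.
  by rewrite expv0 => /vlineP [c ->]; rewrite mxadjZ memvZ // mxadj1 memv_line.
rewrite {1}expvSr expvSl; exact: prodv_adj.
Qed.

Lemma one_expv (S : {vspace 'M[C]_n.+1}) : 1%:M \in S -> forall k, 1%:M \in (S ^+ k)%VS.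
Proof.
move=> h1; elim=> [|k IH]; first by rewrite expv0 memv_line.
by rewrite expvSr -[1%:M]mulr1 memv_mul.
Qed.

Lemma expv_stab (S : {vspace 'M[C]_n.+1}) : 1%:M \in S -> exists k, (S ^+ k = S ^+ k.+1)%VS.
Proof.
move=> h1; apply: NNPP => hno.
have mono k : (S ^+ k <= S ^+ k.+1)%VS.
  by rewrite expvSr -{1}[(S ^+ k)%VS]prodv1; apply: prodvSr; rewrite -memvE.
have gr k : (k <= \dim (S ^+ k))%N.
  elim: k => [|k IH] //; apply: leq_ltn_trans IH _.
  rewrite ltn_neqAle dimvS // andbT; apply/negP => /eqP e; apply: hno; exists k.
  by apply/eqP; rewrite eqEdim mono e leqnn.
have := gr (\dim (fullv : {vspace 'M[C]_n.+1})).+1.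
by rewrite ltnNge dimvS // subvf.
Qed.


Lemma bwd (S : {vspace 'M[C]_n.+1}) : quantum_graph S ->
  (forall (m : nat) (P : 'I_m -> 'M[C]_n.+1),
     (forall i, nontrivial_projection (P i)) ->
     (forall i j, i != j -> P i *m P j = 0) ->
     \sum_(i < m) P i = 1%:M ->
     (2 * (m - 1) <= \sum_(i < m) \sum_(j < m | i != j) \dim (compress (P j) S (P i)))%N) ->
  qconnected S.
Proof.
move=> [h1 hadj] H.
have [k hk] := expv_stab h1.
have hstab j : (S ^+ (k + j))%VS = (S ^+ k)%VS.
  elim: j => [|j IH]; first by rewrite addn0.
  by rewrite addnS expvSr IH -expvSr -hk.
have sA : star_alg (S ^+ k)%VS.
  split; first exact: one_expv.
    by move=> x y xA yA; rewrite mulmxE -(hstab k) expvD memv_mul.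
  exact: expv_adj.
have SA : (S <= S ^+ k)%VS.
  rewrite hk expvSr; apply/subvP => x xS; rewrite -[x]mul1r; apply: memv_mul xS.
  exact: one_expv.
case: (eqVneq (S ^+ k)%VS fullv) => [Af|An]; first by exists k.
have [Q [[QQ aQ] Q0 Q1 cQ]] := commutant_proj sA An.
pose P (i : 'I_2) := if val i == 0%N then Q else 1%:M - Q.
have cP i B : B \in S -> P i *m B = B *m P i.
  move=> BS; have BA := subvP SA _ BS; rewrite /P; case: ifP => _; first exact: cQ.
  by rewrite mulmxBl mul1mx mulmxBr mulmx1 cQ.
have dP i j : i != j -> P i *m P j = 0.
  move=> ij; rewrite /P; case: ifP => hi; case: ifP => hj.
  - by move: ij; rewrite -val_eqE (eqP hi) (eqP hj).
  - by rewrite mulmxBr mulmx1 QQ subrr.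
  - by rewrite mulmxBl mul1mx QQ subrr.
  - have := ltn_ord i; have := ltn_ord j; move: ij hi hj; rewrite -val_eqE.
    by case: i => [[|[|i]] ?] //; case: j => [[|[|j]] ?].
have nP i : nontrivial_projection (P i).
  rewrite /P; case: ifP => _.
    by split; [split | split; apply/eqP].
  split; [split | split].
  - by rewrite mulmxBl mul1mx mulmxBr mulmx1 QQ subrr subr0.
  - by rewrite mxadjD mxadjN mxadj1 aQ.
  - by move/subr0_eq => e; move/eqP: Q1; apply; rewrite e.
  - move=> e; move/eqP: Q0; apply.
    by rewrite -[Q](subKr 1%:M) e subrr.
have sP : \sum_(i < 2) P i = 1%:M by rewrite big_ord_recl big_ord1 /P /= addrC subrK.
have := H 2%N P nP dP sP.
rewrite big1 // => i _; rewrite big1 // => j ij.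
apply/compress0P => B BS; rewrite -mulmxA -cP // mulmxA dP ?mul0mx //.
by rewrite eq_sym.
Qed.

End Bk.

Unset Implicit Arguments.

Theorem theorem3p5 (R : realType) (n : nat) (S : {vspace 'M[R[i]]_n.+1}) :
  quantum_graph S ->
  (qconnected S <->
   forall (m : nat) (P : 'I_m -> 'M[R[i]]_n.+1),
     (forall i, nontrivial_projection (P i)) ->
     (forall i j, i != j -> P i *m P j = 0) ->
     \sum_(i < m) P i = 1%:M ->
     (2 * (m - 1) <= \sum_(i < m) \sum_(j < m | i != j) \dim (compress (P j) S (P i)))%N).
Proof.
move=> qS; split; first exact: fwd.
exact: bwd.
Qed.
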